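(* Let $C$ be a family of completely positive (symmetric, real) tensors of orders $m\ge 2$ and dimensions $n\ge 2$ satisfying: (1) for all $m,n\ge 2$ there is at least one $m$th order $n$-dimensional tensor in $C$; (2) every matrix (order $m=2$) in $C$ is positive definite; (3) whenever $\mathcal{A}=(a_{i_1\dots i_m})\in C$ has order $m\ge 3$ and dimension $n$, the $(m-1)$th order $n$-dimensional sub-tensor $\mathcal{A}_1=(a_{1 i_2\dots i_m})$ obtained by fixing the first index $i_1=1$ also belongs to $C$. Then every tensor in $C$ is strongly completely positive, and every even order tensor in $C$ is positive definite.
   Context: For $\mathbf{u}\in\mathbb{R}^n$, $\mathbf{u}^m$ is the tensor with entries $u_{i_1}\cdots u_{i_m}$. A symmetric tensor $\mathcal{A}$ of order $m$ and dimension $n$ is completely positive if $\mathcal{A}=(\mathbf{u}^{(1)})^m+\dots+(\mathbf{u}^{(r)})^m$ for some nonnegative $\mathbf{u}^{(1)},\dots,\mathbf{u}^{(r)}\in\mathbb{R}^n$, and strongly completely positive if such a decomposition exists with $\{\mathbf{u}^{(1)},\dots,\mathbf{u}^{(r)}\}$ spanning $\mathbb{R}^n$. For even $m$, $\mathcal{A}$ is positive definite if $\sum_{i_1,\dots,i_m}a_{i_1\dots i_m}x_{i_1}\cdots x_{i_m}>0$ for all nonzero $\mathbf{x}\in\mathbb{R}^n$. *)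

(* Defs.v *)
From HB Require Import structures.
From mathcomp Require Import all_boot all_order all_algebra all_fingroup.
Set Implicit Arguments. Unset Strict Implicit. Unset Printing Implicit Defensive.
Import Order.TTheory GRing.Theory Num.Theory.
Local Open Scope ring_scope.

Definition tensor (R : Type) (m n : nat) := {ffun {ffun 'I_m -> 'I_n} -> R}.

Section Tensors.
Variable R : realFieldType.

Definition symmetric_tensor m n (A : tensor R m n) : Prop :=
  forall (s : 'S_m) (idx : {ffun 'I_m -> 'I_n}),
    A [ffun k => idx (s k)] = A idx.

Definition rank1 m n (u : 'rV[R]_n) : tensor R m n :=
  [ffun idx : {ffun 'I_m -> 'I_n} => \prod_(k < m) u 0 (idx k)].

Definition cp_decomp m n (A : tensor R m n) r (U : 'M[R]_(r, n)) : Prop :=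
  (forall j i, 0 <= U j i) /\ A = \sum_(j < r) rank1 m (row j U).

Definition completely_positive m n (A : tensor R m n) : Prop :=
  symmetric_tensor A /\ exists r (U : 'M[R]_(r, n)), cp_decomp A U.

(* strongly CP: some nonnegative decomposition whose vectors span R^n
   (row_full U : the rows of U span 'rV_n) *)
Definition strongly_completely_positive m n (A : tensor R m n) : Prop :=
  symmetric_tensor A /\
  exists r (U : 'M[R]_(r, n)), cp_decomp A U /\ row_full U.

Definition tensor_form m n (A : tensor R m n) (x : 'rV[R]_n) : R :=
  \sum_(idx : {ffun 'I_m -> 'I_n}) A idx * \prod_(k < m) x 0 (idx k).

Definition positive_definite m n (A : tensor R m n) : Prop :=
  forall x : 'rV[R]_n, x != 0 -> 0 < tensor_form A x.

(* sub-tensor A_1 = (a_{1 i_2 ... i_m}) obtained by fixing the first index to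
   the first coordinate (ord0) *)
Definition sub_first m n (A : tensor R m.+1 n.+1) : tensor R m n.+1 :=
  [ffun j : {ffun 'I_m -> 'I_n.+1} =>
     A [ffun k : 'I_m.+1 => if unlift ord0 k is Some k' then j k' else ord0]].

End Tensors.

(* Main.v *)
Require Import Defs.
From HB Require Import structures.
From mathcomp Require Import all_boot all_order all_algebra all_fingroup.
Import Order.TTheory GRing.Theory Num.Theory.
Local Open Scope ring_scope.

Lemma form_expand (R : realFieldType) m n (A : tensor R m n) r (w : 'I_r -> R)
  (U : 'M[R]_(r, n)) (x : 'rV[R]_n) :
  (forall idx, A idx = \sum_j w j * \prod_(k < m) U j (idx k)) ->
  tensor_form A x = \sum_j w j * (\sum_i U j i * x 0 i) ^+ m.
Proof.
move=> HA; rewrite /tensor_form.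
under eq_bigr => idx _ do rewrite HA mulr_suml.
rewrite exchange_big /=; apply: eq_bigr => j _.
rewrite -[in RHS](card_ord m) -prodr_const bigA_distr_bigA mulr_sumr; apply: eq_bigr => idx _.
by rewrite -mulrA -big_split.
Qed.

Lemma sub_first_expand (R : realFieldType) m n (A : tensor R m.+1 n.+1) r
  (w : 'I_r -> R) (U : 'M[R]_(r, n.+1)) :
  (forall idx, A idx = \sum_j w j * \prod_(k < m.+1) U j (idx k)) ->
  forall idx, sub_first A idx = \sum_j (w j * U j ord0) * \prod_(k < m) U j (idx k).
Proof.
move=> HA idx; rewrite /sub_first ffunE HA; apply: eq_bigr => j _.
rewrite big_ord_recl ffunE unlift_none mulrA; congr (_ * _).
by apply: eq_bigr => k _; rewrite ffunE liftK.
Qed.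

Lemma span_lemma (R : realFieldType)
  (C : forall m n : nat, tensor R m n -> Prop)
  (HC : forall m n (A : tensor R m n), C m n A ->
          [/\ (2 <= m)%N, (2 <= n)%N & completely_positive A])
  (H2 : forall n (A : tensor R 2 n), C 2%N n A -> positive_definite A)
  (H3 : forall m n (A : tensor R m.+1 n.+1), (3 <= m.+1)%N ->
          C m.+1 n.+1 A -> C m n.+1 (sub_first A)) :
  forall m n (A : tensor R m n.+1) r (w : 'I_r -> R) (U : 'M[R]_(r, n.+1)),
  C m n.+1 A ->
  (forall idx, A idx = \sum_j w j * \prod_(k < m) U j (idx k)) ->
  forall x : 'rV[R]_n.+1, (forall j, \sum_i U j i * x 0 i = 0) -> x = 0.
Proof.
elim=> [|m IH] n A r w U CA HA x Hx.
  by have [] := HC _ _ _ CA.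
case: m IH A HA CA => [|[|m]] IH A HA CA.
- by have [] := HC _ _ _ CA.
- apply/eqP; apply/negPn/negP => xn0.
  have := H2 _ _ CA x xn0.
  rewrite (form_expand _ _ _ _ _ _ _ x HA) big1 ?ltxx // => j _.
  by rewrite Hx expr0n mulr0.
- apply: (IH n (sub_first A) r (fun j => w j * U j ord0) U) => //.
    exact: H3.
  exact: (sub_first_expand _ _ _ _ _ _ _ HA).
Qed.

Theorem theorem4p1 (R : realFieldType)
  (C : forall m n : nat, tensor R m n -> Prop)
  (HC : forall m n (A : tensor R m n), C m n A ->
          [/\ (2 <= m)%N, (2 <= n)%N & completely_positive A])
  (H1 : forall m n : nat, (2 <= m)%N -> (2 <= n)%N -> exists A, C m n A)
  (H2 : forall n (A : tensor R 2 n), C 2%N n A -> positive_definite A)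
  (H3 : forall m n (A : tensor R m.+1 n.+1), (3 <= m.+1)%N ->
          C m.+1 n.+1 A -> C m n.+1 (sub_first A)) :
  forall m n (A : tensor R m n), C m n A ->
    strongly_completely_positive A /\ (~~ odd m -> positive_definite A).
Proof.
move=> m [|n] A CA; first by have [] := HC _ _ _ CA.
have [m2 n2 [symA [r [U [U0 AU]]]]] := HC _ _ _ CA.
have HA : forall idx, A idx = \sum_j (fun _ => 1) j * \prod_(k < m) U j (idx k).
  move=> idx; rewrite AU sum_ffunE; apply: eq_bigr => j _.
  by rewrite ffunE mul1r; apply: eq_bigr => k _; rewrite mxE.
have Hspan := span_lemma _ _ HC H2 H3 _ _ _ _ _ _ CA HA.
split.
  split=> //; exists r, U; split; first by split.
  rewrite /row_full -mxrank_tr; change (row_free U^T); apply: inj_row_free => v Hv.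
  apply: Hspan => j.
  have := congr1 (fun M : 'M_(1, r) => M 0 j) Hv; rewrite /= !mxE => H.
  rewrite -[RHS]H; apply: eq_bigr => i _; rewrite mxE mulrC //.
move=> ev x xn0; rewrite (form_expand _ _ _ _ _ _ _ x HA).
rewrite lt_def; apply/andP; split; last first.
  by apply: sumr_ge0 => j _; rewrite mul1r exprn_even_ge0.
apply/negP => /eqP s0.
have Z := psumr_eq0P (fun j _ => _) s0.
move/negP: xn0; apply; apply/eqP; apply: Hspan => j.
have /eqP := Z (fun j => ltac:(by rewrite mul1r exprn_even_ge0)) j isT.
by rewrite mul1r expf_eq0 => /andP [_ /eqP].
Qed.
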